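(* Let $u>0$. Let $c(u)$ be the smallest positive solution $c$, with $0<uc<1/e$, of $uc\,T_1'(uc)-T_1(uc)=u$, and let $\alpha(u)$ be the smallest positive solution of $\alpha e^{-\alpha}=\frac{1}{(1+u)e}$. Then $$\frac{c(u)}{1+\frac1u T_1(uc(u))}=\alpha(u).$$ In particular the lower bound $\frac{c(u)}{1+\frac1u T_1(uc(u))}C(\beta)^{-1}$ on the radius of convergence of the virial expansion equals Groeneveld's bound $\alpha(u)C(\beta)^{-1}$.
   Context: $T_1(z):=z+\sum_{n\ge1}n^n\frac{z^{n+1}}{(n+1)!}$, a power series with radius of convergence $1/e$; $T_1'$ is its derivative. $C(\beta)=\int_{\mathbb R^d}|e^{-\beta\phi(x)}-1|\,dx$ for the pair potential $\phi$. *)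

(* Defs.v *)
From Stdlib Require Import Reals Arith ClassicalEpsilon.
Open Scope R_scope.

(* Coefficients of T_1(z) = z + sum_{n>=1} n^n z^{n+1}/(n+1)!
   = sum_{n>=0} n^n z^{n+1}/(n+1)!  (with 0^0 = 1).
   T1_coef (S n) = n^n/(n+1)!, T1_coef 0 = 0. *)
Definition T1_coef (k : nat) : R :=
  match k with
  | O => 0
  | S n => (INR n) ^ n / INR (Factorial.fact (S n))
  end.

(* The sum of the power series T_1 at x (meaningful for |x| < 1/e, where
   the series converges; chosen arbitrarily otherwise). *)
Definition T1 (x : R) : R :=
  epsilon (inhabits 0) (fun l => Pser T1_coef x l).

(* Main.v *)
Require Import Defs.
From Stdlib Require Import Reals Lia ClassicalEpsilon.
From Coquelicot Require Import Coquelicot.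
From mathcomp Require Import all_boot all_algebra ring.
Set Implicit Arguments. Unset Strict Implicit. Unset Printing Implicit Defensive.
Import GRing.Theory Num.Theory.
Local Open Scope ring_scope.
Ltac slia := repeat match goal with H : is_true (leq _ _) |- _ => move/leP in H end; try apply/leP; rewrite -?plusE -?minusE -?multE; repeat match goal with H : _ |- _ => rewrite -?plusE -?minusE -?multE in H end; lia.

Lemma widen_sum (F : nat -> int) m N : (m <= N)%N -> (forall i, (m < i)%N -> F i = 0) ->
  \sum_(i < m.+1) F i = \sum_(i < N.+1) F i.
Proof.
move=> hmN hF; rewrite (big_ord_widen N.+1 F) // big_mkcond /=.
apply: eq_bigr => i _; case: ifP => // /negbT; rewrite -leqNgt => h.
by rewrite hF.
Qed.

Lemma bin_swap0 n k j : (n < j + k)%N -> ('C(n,k) * 'C(n-k,j) = 0)%N.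
Proof.
move=> h; case: (leqP k n) => hk; first by rewrite [X in (_ * X)%N]bin_small ?muln0 //; slia.
by rewrite bin_small.
Qed.

Lemma bin_swap n k j : ('C(n,k) * 'C(n-k,j) = 'C(n,j) * 'C(n-j,k))%N.
Proof.
case: (leqP (j + k) n) => hjk; last first.
  have -> : ('C(n,j) * 'C(n-j,k) = 0)%N.
    case: (leqP j n) => hj; first by rewrite [X in (_ * X)%N]bin_small ?muln0 //; slia.
    by rewrite bin_small.
  case: (leqP k n) => hk; first by rewrite [X in (_ * X)%N]bin_small ?muln0 //; slia.
  by rewrite bin_small.
have h1 : (k <= n)%N by slia.
have h2 : (j <= n - k)%N by slia.
have h3 : (j <= n)%N by slia.
have h4 : (k <= n - j)%N by slia.
apply/eqP; rewrite -(eqn_pmul2r (_ : 0 < k`! * j`! * (n-k-j)`!)%N); last first.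
  by rewrite !muln_gt0 !fact_gt0.
apply/eqP.
have e1 : ('C(n, k) * 'C(n - k, j) * (k`! * j`! * (n - k - j)`!) =
   ('C(n, k) * (k`! * (n-k)`!)))%N.
  by rewrite -(bin_fact h2); ring.
have e2 : ('C(n, j) * 'C(n - j, k) * (k`! * j`! * (n - k - j)`!) =
   ('C(n, j) * (j`! * (n-j)`!)))%N.
  have -> : (n - k - j = n - j - k)%N by slia.
  by rewrite -(bin_fact h4); ring.
by rewrite e1 e2 (bin_fact h1) (bin_fact h3).
Qed.

Definition Fa (a : nat -> int) (n : nat) (y : int) : int :=
  \sum_(k < n.+1) ('C(n,k))%:R * a k * (y + (n - k)%:R) ^+ (n - k).

Lemma Fa_shift a n y :
  Fa a n y = \sum_(j < n.+1) ('C(n,j))%:R * y ^+ j * Fa a (n - j) j%:R.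
Proof.
rewrite /Fa.
have L : forall k : 'I_n.+1, ('C(n,k))%:R * a k * (y + (n - k)%:R) ^+ (n - k) =
   \sum_(j < n.+1) ('C(n,k))%:R * a k * (((n-k)%:R ^+ (n - k - j) * y ^+ j) *+ 'C(n-k, j)).
  move=> k; rewrite addrC exprDn mulr_sumr.
  apply: (widen_sum (F := fun j => ('C(n,k))%:R * a k * (((n-k)%:R ^+ (n - k - j) * y ^+ j) *+ 'C(n-k, j)))).
    by rewrite leq_subr.
  by move=> i hi; rewrite (bin_small hi) mulr0n mulr0.
rewrite (eq_bigr _ (fun k _ => L k)) exchange_big /=.
apply: eq_bigr => j _.
rewrite mulr_sumr.
symmetry.
rewrite (widen_sum (F := fun k => ('C(n,j))%:R * y ^+ j * (('C(n - j, k))%:R * a k * (j%:R + (n - j - k)%:R) ^+ (n - j - k))) (N := n)); last first.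
- by move=> i hi; rewrite (bin_small hi) !(mul0r, mulr0).
- by rewrite leq_subr.
apply: eq_bigr => k _.
case: (leqP (j + k) n) => hjk.
  have e1 : (n - j - k = n - k - j)%N by slia.
  have e2 : (j + (n - j - k) = n - k)%N by slia.
  rewrite -natrD e2 e1 -mulr_natr.
  have e3 : ('C(n, j))%:R * ('C(n - j, k))%:R = ('C(n, k))%:R * ('C(n - k, j))%:R :> int.
    by rewrite -!natrM bin_swap.
  transitivity (('C(n, j))%:R * ('C(n - j, k))%:R * (y ^+ j * a k * (n - k)%:R ^+ (n - k - j)) : int); first by ring.
  by rewrite e3; ring.
transitivity ((('C(n, j) * 'C(n - j, k))%N)%:R * (y ^+ j * a k * (j%:R + (n - j - k)%:R) ^+ (n - j - k)) : int).
  by rewrite natrM; ring.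
transitivity ((('C(n, k) * 'C(n - k, j))%N)%:R * (a k * (n - k)%:R ^+ (n - k - j) * y ^+ j) : int); last first.
  by rewrite natrM -mulr_natr; ring.
rewrite (@bin_swap0 n j k) ?(@bin_swap0 n k j) ?mul0r //; by rewrite addnC.
Qed.

Definition Rf (n : nat) (y : int) : int := n%:R * (y + n%:R) ^+ n.-1.

Lemma Rf_shift n y :
  Rf n y = \sum_(j < n.+1) ('C(n,j))%:R * y ^+ j * Rf (n - j) j%:R.
Proof.
case: n => [|m].
  by rewrite /Rf big_ord1 /= !mulr0n !mul0r mulr0.
rewrite /Rf /=.
transitivity ((m.+1)%:R * \sum_(j < m.+2) ((m.+1)%:R ^+ (m - j) * y ^+ j *+ 'C(m,j)) : int).
  congr (_ * _).
  rewrite -(widen_sum (m:=m) (N:=m.+1) (F := fun j => (m.+1)%:R ^+ (m - j) * y ^+ j *+ 'C(m,j))) //.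
    by rewrite addrC exprDn.
  by move=> i hi; rewrite (bin_small hi) mulr0n.
rewrite mulr_sumr; apply: eq_bigr => j _.
have hj : (j <= m.+1)%N by rewrite -ltnS ltn_ord.
rewrite -natrD (subnKC hj).
have e : ((m.+1 - j).-1 = m - j)%N by rewrite -subn1 -subnDA addn1 subSS.
rewrite e.
have e2 : ('C(m.+1,j) * (m.+1 - j) = m.+1 * 'C(m,j))%N by rewrite mulnC -mul_bin_down.
rewrite -[_ *+ 'C(m, j)]mulr_natr.
transitivity (((m.+1 * 'C(m,j))%N)%:R * (y ^+ j * (m.+1)%:R ^+ (m - j)) : int).
  by rewrite natrM; ring.
by rewrite -e2 natrM; ring.
Qed.

Lemma delta n m : (m < n)%N ->
  \sum_(k < n.+1) ('C(n,k))%:R * (-1) ^+ (n - k) * (k%:R) ^+ m = 0 :> int.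
Proof.
elim: n m => [|n IH] m hm; first by [].
case: m hm => [|m] hm.
  transitivity ((-1 + 1 : int) ^+ n.+1); last by rewrite addNr expr0n.
  rewrite exprDn; apply: eq_bigr => i _.
  by rewrite expr0 expr1n !mulr1 mulr_natl.
rewrite big_ord_recl /= mulr0n expr0n /= mulr0 add0r.
transitivity ((n.+1)%:R * \sum_(i < n.+1) \sum_(l < m.+1)
    (('C(m,l))%:R * (('C(n,i))%:R * (-1) ^+ (n - i) * (i%:R) ^+ (m - l))) : int).
  rewrite mulr_sumr; apply: eq_bigr => i _.
  rewrite /bump /= add1n subSS.
  have e2 : ('C(n.+1, i.+1) * i.+1 = n.+1 * 'C(n,i))%N by rewrite mulnC mul_bin_diag.
  have h1 : (i.+1)%:R = i%:R + 1 :> int by rewrite -addn1 natrD.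
  rewrite exprS.
  transitivity ((('C(n.+1, i.+1) * i.+1)%N)%:R * (-1) ^+ (n - i) * ((i%:R + 1) ^+ m) : int).
    by rewrite natrM h1; ring.
  rewrite e2 natrM exprDn !mulr_sumr; apply: eq_bigr => l _.
  rewrite expr1n mulr1 -mulr_natl; ring.
rewrite exchange_big /= big1 ?mulr0 // => l _.
rewrite -mulr_sumr IH ?mulr0 //.
rewrite ltnS in hm; apply: leq_ltn_trans hm; exact: leq_subr.
Qed.

Definition av (k : nat) : int := if k is k'.+1 then (k'.+1)%:R ^+ k' else 0.

Lemma at_neg n : Fa av n (- n%:R) = Rf n (- n%:R).
Proof.
case: n => [|[|m]].
- by rewrite /Fa /Rf big_ord1 /= mulr0 !mul0r.
- by rewrite /Fa /Rf big_ord_recl big_ord1 /=.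
- rewrite /Rf /= addNr expr0n /= mulr0.
  rewrite /Fa; etransitivity; last exact: (delta (n := m.+2) (m := m.+1)). 
  apply: eq_bigr => k _.
  have hk : (k <= m.+2)%N by rewrite -ltnS ltn_ord.
  rewrite (natrB _ hk) addrA addNr add0r.
  case: k hk => [[|k] hk0] hk /=.
    by rewrite mulr0 mul0r expr0n /= mulr0.
  rewrite (exprNn (k.+1)%:R).
  have e : (k + (m.+2 - k.+1) = m.+1)%N by slia.
  transitivity (('C(m.+2, k.+1))%:R * (-1) ^+ (m.+2 - k.+1) * ((k.+1)%:R ^+ (k + (m.+2 - k.+1))) : int).
    rewrite exprD.
    set A := 'C(_,_)%:R; set B := (-1) ^+ _; set C := _ ^+ k; set D := _ ^+ (m.+2 - k.+1).
    ring.
  by rewrite e.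
Qed.

Lemma main_int n y : Fa av n y = Rf n y.
Proof.
elim/ltn_ind: n y => n IH y.
have HE : forall z, Fa av n z - Rf n z = Fa av n 0 - Rf n 0.
  move=> z; rewrite Fa_shift Rf_shift -sumrB big_ord_recl /=.
  rewrite big1 ?addr0; last first.
    move=> i _; rewrite -mulrBr IH ?subrr ?mulr0 //.
    have := ltn_ord i; rewrite /bump /=; slia.
  by rewrite subn0 bin0 expr0 !mul1r mulr0n.
apply/eqP; rewrite -subr_eq0; apply/eqP.
by rewrite HE -(HE (- n%:R)) at_neg subrr.
Qed.

Definition avn (k : nat) : nat := if k is k'.+1 then (k'.+1 ^ k')%N else 0%N.

Lemma main_nat n :
  (\sum_(k < n.+1) 'C(n,k) * avn k * (n - k) ^ (n - k) = n * n ^ n.-1)%N.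
Proof.
apply/eqP; rewrite -(eqr_nat int); apply/eqP.
rewrite natrM natrX; have := main_int n 0; rewrite /Fa /Rf add0r => <-.
rewrite natr_sum; apply: eq_bigr => k _.
rewrite !natrM !natrX add0r; congr (_ * _ * _).
by case: (nat_of_ord k) => [|k'] //=; rewrite natrX.
Qed.

Close Scope ring_scope.
Open Scope R_scope.
From Stdlib Require Import Ring Field Lra.

Lemma fact_eq n : Factorial.fact n = n`!.
Proof. elim: n => [|n IH] //=. by rewrite factS IH. Qed.

Lemma INR_addn a b : INR (a + b)%N = (INR a + INR b).
Proof. by rewrite -plusE plus_INR. Qed.
Lemma INR_muln a b : INR (a * b)%N = (INR a * INR b).
Proof. by rewrite -multE mult_INR. Qed.
Lemma INR_expn a b : INR (a ^ b)%N = (INR a ^ b).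
Proof. elim: b => [|b IH] //=. by rewrite expnS INR_muln IH. Qed.

Lemma INR_big n (f : nat -> nat) :
  INR (\sum_(k < n.+1) f k)%N = sum_f_R0 (fun k => INR (f k)) n.
Proof.
elim: n => [|n IH]; first by rewrite big_ord1.
by rewrite big_ord_recr /= INR_addn IH.
Qed.

Lemma fact_pos n : (0 < INR (Factorial.fact n)).
Proof. apply: lt_0_INR; apply/ltP; rewrite fact_eq; exact: fact_gt0. Qed.

Lemma main_R n : (1 <= n)%N ->
  sum_f_R0 (fun k => INR 'C(n,k) * INR (avn k) * INR (n - k) ^ (n - k) / INR (Factorial.fact n)) n
  = (INR n ^ n / INR (Factorial.fact n)).
Proof.
move=> hn.
have H := main_nat n.
have H2 : INR (\sum_(k < n.+1) 'C(n,k) * avn k * (n - k) ^ (n - k))%N = (INR n ^ n).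
  rewrite H INR_muln INR_expn; case: n hn {H} => // m _ /=. 
rewrite (@INR_big n (fun k => 'C(n,k) * avn k * (n - k) ^ (n - k))%N) in H2.
rewrite /Rdiv -scal_sum [in RHS]Rmult_comm -H2. congr (_ * _).
apply PartSum.sum_eq => k _. by rewrite !INR_muln INR_expn.
Qed.

Lemma bin_fact_R n k : (k <= n)%N ->
  INR (Factorial.fact n) = (INR 'C(n,k) * INR (Factorial.fact k) * INR (Factorial.fact (n-k))).
Proof. move=> hk. by rewrite -!INR_muln !fact_eq -mulnA bin_fact. Qed.

Unset Implicit Arguments.
Set Strict Implicit.

Definition yc (n : nat) : R := INR n ^ n / INR (Factorial.fact n).
Definition tc (n : nat) : R :=
  match n with O => 0 | S m => INR (S m) ^ m / INR (Factorial.fact (S m)) end.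

Lemma coef_id n : (1 <= n)%N ->
  sum_f_R0 (fun k => tc k * yc (n - k)) n = yc n.
Proof.
move=> hn; rewrite /yc -main_R //; apply PartSum.sum_eq => k hk.
have hk' : (k <= n)%N by apply/leP.
have E := bin_fact_R hk'.
have h1 := fact_pos k. have h2 := fact_pos (n - k).
have hC : 0 < INR ('C(n,k)).
  apply: lt_0_INR; apply/ltP; by rewrite bin_gt0.
rewrite E.
case: k hk hk' E h1 h2 hC => [|k] hk hk' E h1 h2 hC.
  change (tc 0) with 0; change (avn 0) with 0%N.
  rewrite /=; field; repeat split; apply: Rgt_not_eq; assumption.
change (avn k.+1) with (k.+1 ^ k)%N.
change (tc k.+1) with (INR k.+1 ^ k / INR (Factorial.fact k.+1)).
rewrite INR_expn; field; repeat split; apply: Rgt_not_eq; assumption.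
Qed.

Lemma exp_pow_INR x n : exp x ^ n = exp (INR n * x).
Proof.
elim: n => [|n IH]; first by rewrite /= Rmult_0_l exp_0.
by rewrite S_INR -tech_pow_Rmult IH -exp_plus; f_equal; ring.
Qed.

Lemma E_gt1 : 1 < exp 1.
Proof. have := exp_ineq1 1; lra. Qed.

Lemma succ_pow_le n : (1 <= n)%N -> (INR n + 1) ^ n <= exp 1 * INR n ^ n.
Proof.
move=> hn.
have hpos : 0 < INR n by apply: lt_0_INR; apply/ltP.
have -> : INR n + 1 = INR n * (1 + / INR n) by field; lra.
rewrite Rpow_mult_distr Rmult_comm; apply: Rmult_le_compat_r.
  by apply: pow_le; lra.
have -> : exp 1 = exp (/ INR n) ^ n by rewrite exp_pow_INR; f_equal; field; lra.
apply: pow_incr; split.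
  have := Rinv_0_lt_compat _ hpos; lra.
exact: exp_ineq1_le.
Qed.

Lemma yc_nonneg n : 0 <= yc n.
Proof. rewrite /yc; apply: Rmult_le_pos; [apply: pow_le; exact: pos_INR|].
  by apply: Rlt_le; apply: Rinv_0_lt_compat; exact: fact_pos. Qed.

Lemma yc_bound n : yc n <= exp 1 ^ n.
Proof.
elim: n => [|n IH]; first by rewrite /yc /=; lra.
have hE := E_gt1.
have Hf := fact_pos n.
have -> : yc n.+1 = (INR n + 1) ^ n / INR (Factorial.fact n).
  rewrite /yc.
  change (Factorial.fact n.+1) with (n.+1 * Factorial.fact n)%coq_nat.
  rewrite mult_INR S_INR -tech_pow_Rmult.
  have := pos_INR n => h; field; lra.
case: n IH Hf => [|n] IH Hf.
  rewrite /=; lra.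
apply: (Rle_trans _ (exp 1 * yc n.+1)).
  rewrite /yc /Rdiv -Rmult_assoc; apply: Rmult_le_compat_r.
    by apply: Rlt_le; apply: Rinv_0_lt_compat.
  exact: succ_pow_le.
apply: (Rmult_le_compat_l (exp 1) (yc n.+1) (exp 1 ^ n.+1)); [lra | exact IH].
Qed.

Lemma tc_nonneg n : 0 <= tc n.
Proof. case: n => [|m]; first by change (tc 0) with 0; lra.
  change (tc m.+1) with (INR m.+1 ^ m / INR (Factorial.fact m.+1)).
  apply: Rmult_le_pos; [apply: pow_le; exact: pos_INR|].
  by apply: Rlt_le; apply: Rinv_0_lt_compat; exact: fact_pos. Qed.

Lemma tc_le_yc n : tc n <= yc n.
Proof.
case: n => [|m]; first by have := yc_nonneg 0; rewrite /=; lra.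
change (tc m.+1) with (INR m.+1 ^ m / INR (Factorial.fact m.+1)).
rewrite /yc -tech_pow_Rmult /Rdiv Rmult_assoc.
have h1 : 1 <= INR m.+1 by rewrite S_INR; have := pos_INR m; lra.
rewrite -[X in X <= _]Rmult_1_l; apply: Rmult_le_compat_r => //.
apply: Rmult_le_pos; [apply: pow_le; lra|].
by apply: Rlt_le; apply: Rinv_0_lt_compat; exact: fact_pos.
Qed.

Lemma T1c_nonneg n : 0 <= T1_coef n.
Proof. case: n => [|m]; first by change (T1_coef 0) with 0; lra.
  change (T1_coef m.+1) with (INR m ^ m / INR (Factorial.fact m.+1)).
  apply: Rmult_le_pos; [apply: pow_le; exact: pos_INR|].
  by apply: Rlt_le; apply: Rinv_0_lt_compat; exact: fact_pos. Qed.

Lemma T1c_bound n : T1_coef n <= exp 1 ^ n.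
Proof.
have hE := E_gt1.
case: n => [|m]; first by change (T1_coef 0) with 0; rewrite /=; lra.
change (T1_coef m.+1) with (INR m ^ m / INR (Factorial.fact m.+1)).
apply: (Rle_trans _ (yc m)); last first.
  apply: (Rle_trans _ _ _ (yc_bound m)).
  rewrite -tech_pow_Rmult -[X in X <= _]Rmult_1_l; apply: Rmult_le_compat_r; last lra.
  by apply: pow_le; lra.
rewrite /yc /Rdiv; apply: Rmult_le_compat_l; first by apply: pow_le; exact: pos_INR.
apply: Rinv_le_contravar; first exact: fact_pos.
change (Factorial.fact m.+1) with (m.+1 * Factorial.fact m)%coq_nat.
rewrite mult_INR S_INR.
have := fact_pos m; have := pos_INR m; nra.
Qed.

Lemma radius_ok (a : nat -> R) x :
  (forall n, Rabs (a n) <= exp 1 ^ n) -> Rabs x < / exp 1 ->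
  Rbar_lt (Rabs x) (CV_radius a).
Proof.
move=> ha hx.
have hE := E_gt1.
set r := (Rabs x + / exp 1) / 2.
have hr0 : 0 <= r by have := Rabs_pos x; rewrite /r; have := Rinv_0_lt_compat _ (Rlt_trans _ _ _ Rlt_0_1 hE); lra.
have hr1 : exp 1 * r < 1.
  have : r < / exp 1 by rewrite /r; lra.
  move=> h; have := Rmult_lt_compat_l (exp 1) _ _ (Rlt_trans _ _ _ Rlt_0_1 hE) h.
  rewrite Rinv_r //; lra.
have hd : CV_disk a r.
  rewrite /CV_disk.
  apply: (ex_series_le _ (fun n => (exp 1 * r) ^ n)).
    move=> n. rewrite /norm /= /abs /= Rabs_Rabsolu Rabs_mult Rpow_mult_distr.
    rewrite (Rabs_right (r ^ n)); last by apply: Rle_ge; apply: pow_le.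
    apply: Rmult_le_compat_r; [by apply: pow_le | exact: ha].
  apply: ex_series_geom. rewrite Rabs_right; first lra.
  apply: Rle_ge; apply: Rmult_le_pos; lra.
have hle : Rbar_le r (CV_radius a) by apply: (proj1 (Lub_Rbar_correct _)).
apply: (Rbar_lt_le_trans _ r) => //=.
rewrite /r; lra.
Qed.

Definition Tt z := PSeries tc z.
Definition Y z := PSeries yc z.
Definition Yd z := PSeries (PS_decr_1 yc) z.
Definition T1s z := PSeries T1_coef z.

Section Inside.
Variable z : R.
Hypothesis hz : Rabs z < / exp 1.

Lemma rad_yc : Rbar_lt (Rabs z) (CV_radius yc).
Proof. apply: radius_ok => // n; rewrite Rabs_right; [exact: yc_bound | apply: Rle_ge; exact: yc_nonneg]. Qed.
Lemma rad_tc : Rbar_lt (Rabs z) (CV_radius tc).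
Proof. apply: radius_ok => // n; rewrite Rabs_right; [| apply: Rle_ge; exact: tc_nonneg].
  exact: (Rle_trans _ _ _ (tc_le_yc n) (yc_bound n)). Qed.
Lemma rad_T1 : Rbar_lt (Rabs z) (CV_radius T1_coef).
Proof. apply: radius_ok => // n; rewrite Rabs_right; [exact: T1c_bound | apply: Rle_ge; exact: T1c_nonneg]. Qed.

Lemma R1 : Y z = 1 + z * Yd z.
Proof.
rewrite /Y /Yd (PSeries_decr_1 yc); last exact: CV_radius_inside rad_yc.
by rewrite /yc /= Rdiv_1_r.
Qed.

Lemma R2 : Tt z * Y z = z * Yd z.
Proof.
rewrite /Tt /Y -PSeries_mult; [|exact: rad_tc|exact: rad_yc].
rewrite (PSeries_decr_1 (PS_mult tc yc)); last exact: ex_pseries_mult rad_tc rad_yc.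
have -> : PS_mult tc yc 0 = 0 by rewrite /PS_mult /= Rmult_0_l.
rewrite Rplus_0_l /Yd; congr (_ * _); apply: PSeries_ext => n.
rewrite /PS_decr_1 /PS_mult; exact: coef_id.
Qed.

Lemma der_tc_eq n : PS_derive tc n = PS_decr_1 yc n.
Proof.
rewrite /PS_decr_1 /PS_derive /yc.
change (tc n.+1) with (INR n.+1 ^ n / INR (Factorial.fact n.+1)).
rewrite -tech_pow_Rmult; have := fact_pos n.+1; move=> h; field; lra.
Qed.

Lemma R3 : is_derive Tt z (Yd z).
Proof.
have -> : Yd z = PSeries (PS_derive tc) z.
  apply: PSeries_ext => n; rewrite /PS_decr_1 /PS_derive /yc.
  change (tc n.+1) with (INR n.+1 ^ n / INR (Factorial.fact n.+1)).
  rewrite -tech_pow_Rmult; have := fact_pos n.+1; move=> h; field; lra.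
exact: is_derive_PSeries rad_tc.
Qed.

Lemma R4 : is_derive T1s z (Y z).
Proof.
have -> : Y z = PSeries (PS_derive T1_coef) z.
  apply: PSeries_ext => n; rewrite /PS_derive /yc.
  change (T1_coef n.+1) with (INR n ^ n / INR (Factorial.fact n.+1)).
  change (Factorial.fact n.+1) with (n.+1 * Factorial.fact n)%coq_nat.
  rewrite mult_INR; have := fact_pos n; have : 0 < INR n.+1 by apply: lt_0_INR; lia.
  move=> h1 h2; field; lra.
exact: is_derive_PSeries rad_T1.
Qed.

Lemma Yd_ge1 : 0 <= z -> 1 <= Yd z.
Proof.
move=> z0.
have ex : ex_pseries (PS_decr_1 yc) z.
  apply: (ex_pseries_ext (PS_derive tc)); first exact: der_tc_eq.
  exact: ex_pseries_derive rad_tc.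
move/ex_pseries_R: ex => ex.
rewrite /Yd /PSeries Series_incr_1 //.
have -> : PS_decr_1 yc 0 * z ^ 0 = 1 by rewrite /PS_decr_1 /yc /=; field.
suff : 0 <= Series (fun k => PS_decr_1 yc k.+1 * z ^ k.+1) by lra.
rewrite -(PSeries_const_0 z) /PSeries.
apply: Series_le; last by apply (proj1 (ex_series_incr_1 (fun n => PS_decr_1 yc n * z ^ n))); exact ex.
move=> n; split; first lra.
rewrite Rmult_0_l; apply: Rmult_le_pos; [exact: yc_nonneg | exact: pow_le].
Qed.

End Inside.

Lemma Tt0 : Tt 0 = 0. Proof. by rewrite /Tt PSeries_0. Qed.
Lemma Y0 : Y 0 = 1. Proof. by rewrite /Y PSeries_0 /yc /=; field. Qed.
Lemma Yd0 : Yd 0 = 1. Proof. by rewrite /Yd PSeries_0 /PS_decr_1 /yc /=; field. Qed.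
Lemma T1s0 : T1s 0 = 0. Proof. by rewrite /T1s PSeries_0. Qed.

Lemma pos_facts z : 0 < z < / exp 1 ->
  1 < Y z /\ 0 < Tt z < 1 /\ Y z * (1 - Tt z) = 1 /\ z * Yd z = Tt z * Y z.
Proof.
move=> [z0 z1].
have hz : Rabs z < / exp 1 by rewrite Rabs_right; lra.
have e1 := R1 z hz. have e2 := R2 z hz. have y1 := Yd_ge1 z hz (Rlt_le _ _ z0).
have hY : 1 < Y z by rewrite e1; nra.
have hT : Tt z = (Y z - 1) / Y z by field_simplify_eq; [nra | lra].
split => //; split; last by split; [rewrite hT; field; lra | lra].
rewrite hT; split.
  apply: Rdiv_lt_0_compat; lra.
apply/Rlt_div_l; lra.
Qed.

Lemma h_deriv z : Rabs z < / exp 1 ->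
  is_derive (fun w => Tt w * exp (- Tt w) - w) z (Yd z * exp (- Tt z) * (1 - Tt z) - 1).
Proof.
move=> hz; have hd := R3 z hz.
auto_derive.
  by split; [exists (Yd z) | split; [exists (Yd z)|]].
rewrite (is_derive_unique _ _ _ hd); ring.
Qed.

Definition hf w := Tt w * exp (- Tt w) - w.

Lemma k_deriv0 w : 0 < w < / exp 1 ->
  derivable_pt_lim (fun w => hf w / w) w 0.
Proof.
move=> hw.
have hz : Rabs w < / exp 1 by rewrite Rabs_right; lra.
have hd := R3 w hz.
apply/is_derive_Reals.
have [hY [hT [e1 e2]]] := pos_facts w hw.
suff : is_derive (fun w => hf w / w) w
  (((Yd w * exp (- Tt w) * (1 - Tt w) - 1) * w - hf w) / (w * w)).
  move=> H; evar (l : R); have -> : 0 = l; last exact H.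
  rewrite /l /hf.
  have num : (Yd w * exp (- Tt w) * (1 - Tt w) - 1) * w - (Tt w * exp (- Tt w) - w) = 0.
    transitivity (exp (- Tt w) * ((1 - Tt w) * (w * Yd w) - Tt w)); first ring.
    rewrite e2.
    transitivity (exp (- Tt w) * (Tt w * (Y w * (1 - Tt w)) - Tt w)); first ring.
    rewrite e1; ring.
  by rewrite num /Rdiv Rmult_0_l.
rewrite /hf; auto_derive.
  by repeat split; try (exists (Yd w); exact hd); lra.
have hD : Derive (fun x => Tt x) w = Yd w := is_derive_unique _ _ _ hd.
rewrite hD; field; lra.
Qed.

Lemma k_const a b : 0 < a <= b -> b < / exp 1 -> hf a / a = hf b / b.
Proof.
move=> [a0 ab] hb.
case: (Req_dec a b) => [->|hne] //.
have [c [Hc _]] := MVT_cor2 (fun w => hf w / w) (fun _ => 0) a b ltac:(lra)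
  (fun c hc => k_deriv0 c ltac:(lra)).
move: Hc; rewrite Rmult_0_l => Hc; lra.
Qed.

Lemma hf0 : hf 0 = 0.
Proof. by rewrite /hf Tt0 Ropp_0 exp_0; ring. Qed.

Lemma hf_zero x0 : 0 < x0 < / exp 1 -> forall w, 0 < w <= x0 -> hf w = 0.
Proof.
move=> hx0.
set K := hf x0 / x0.
have hK : forall w, 0 < w <= x0 -> hf w = K * w.
  move=> w hw; rewrite /K -(k_const w x0) //; last lra.
  field; lra.
have d0 : derivable_pt_lim hf 0 0.
  apply/is_derive_Reals.
  have hz : Rabs 0 < / exp 1 by rewrite Rabs_R0; lra.
  have := h_deriv 0 hz; rewrite Tt0 Yd0 Ropp_0 exp_0.
  have -> : 1 * 1 * (1 - 0) - 1 = 0 by ring.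
  done.
suff K0 : K = 0.
  by move=> w hw; rewrite hK // K0; ring.
case: (Req_dec K 0) => // hK0.
have epos : 0 < Rabs K by apply: Rabs_pos_lt.
have [delta Hd] := d0 _ epos.
set hh := Rmin (delta / 2) x0.
have hd2 : 0 < delta / 2 by have := cond_pos delta; lra.
have hh0 : 0 < hh by apply: Rmin_glb_lt; lra.
have hh1 : hh <= x0 by apply: Rmin_r.
have hh2 : hh <= delta / 2 by apply: Rmin_l.
have := Hd hh ltac:(lra) ltac:(rewrite Rabs_right; have := cond_pos delta; lra).
rewrite Rplus_0_l hf0 hK; last lra.
have -> : (K * hh - 0) / hh - 0 = K by field; lra.
lra.
Qed.

Lemma f_deriv0 x0 w : 0 < x0 < / exp 1 -> 0 <= w <= x0 ->
  derivable_pt_lim (fun w => T1s w - 1 + exp (- Tt w)) w 0.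
Proof.
move=> hx0 hw.
have hz : Rabs w < / exp 1 by rewrite Rabs_right; lra.
have hd := R3 w hz. have hd1 := R4 w hz.
apply/is_derive_Reals.
suff : is_derive (fun w => T1s w - 1 + exp (- Tt w)) w (Y w - exp (- Tt w) * Yd w).
  move=> H; evar (l : R); have -> : 0 = l; last exact H.
  rewrite /l.
  case: (Req_dec w 0) => [->|wne].
    by rewrite Y0 Tt0 Yd0 Ropp_0 exp_0; ring.
  have hw' : 0 < w < / exp 1 by lra.
  have [hY [hT [e1 e2]]] := pos_facts w hw'.
  have hh := hf_zero x0 hx0 w ltac:(lra).
  rewrite /hf in hh.
  have ee : exp (- Tt w) = w / Tt w by field_simplify_eq; lra.
  rewrite ee; field_simplify_eq; [| lra].
  rewrite e2; ring.
auto_derive.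
  by repeat split; try (exists (Yd w); exact hd); try (exists (Y w); exact hd1).
have hD : Derive (fun x => Tt x) w = Yd w := is_derive_unique _ _ _ hd.
have hD1 : Derive (fun x => T1s x) w = Y w := is_derive_unique _ _ _ hd1.
rewrite hD hD1; ring.
Qed.

Lemma T1s_closed x0 : 0 < x0 < / exp 1 -> T1s x0 = 1 - exp (- Tt x0).
Proof.
move=> hx0.
have [c [Hc _]] := MVT_cor2 (fun w => T1s w - 1 + exp (- Tt w)) (fun _ => 0) 0 x0 ltac:(lra)
  (fun c hc => f_deriv0 x0 c hx0 hc).
move: Hc; rewrite T1s0 Tt0 Ropp_0 exp_0 Rmult_0_l; lra.
Qed.

Lemma T1_eq t : Rabs t < / exp 1 -> T1 t = T1s t.
Proof.
move=> ht.
have ex : exists l, Pser T1_coef t l.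
  exists (T1s t); apply/is_pseries_Reals; apply: PSeries_correct.
  exact: CV_radius_inside (rad_T1 t ht).
have := epsilon_spec (inhabits 0) _ ex.
rewrite /T1 => /is_pseries_Reals H.
by rewrite /T1s (is_pseries_unique _ _ _ H).
Qed.

Lemma T1_deriv x0 : 0 < x0 < / exp 1 -> derivable_pt_lim T1 x0 (Y x0).
Proof.
move=> hx0.
have hz : Rabs x0 < / exp 1 by rewrite Rabs_right; lra.
apply/is_derive_Reals.
apply: (is_derive_ext_loc T1s); last exact: R4 x0 hz.
have he : 0 < / exp 1 - x0 by lra.
exists (mkposreal _ he) => t ht.
symmetry; apply: T1_eq.
move: ht; rewrite /ball /= /AbsRing_ball /abs /minus /plus /opp /=. move=> ht.
change (Hierarchy.opp x0) with (- x0) in ht.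
apply: Rabs_def1.
  have := Rabs_def2 _ _ ht; lra.
have := Rabs_def2 _ _ ht; lra.
Qed.

Lemma g_strict a b : 0 < a -> a < b -> b <= 1 -> a * exp (- a) < b * exp (- b).
Proof.
move=> a0 ab b1.
set s := b - a.
have hs : 0 < s by rewrite /s; lra.
have e : exp (- a) = exp (- b) * exp s by rewrite -exp_plus /s; f_equal; ring.
have h1 : 1 - s < exp (- s) by have := exp_ineq1 (- s) ltac:(lra); lra.
have eb : 0 < exp (- b) := exp_pos _.
rewrite e.
have : a < b * exp (- s).
  have : b * (1 - s) <= b * exp (- s) by apply: Rmult_le_compat_l; lra.
  rewrite /s in h1 *; nra.
move=> h2.
have es : exp s * exp (- s) = 1 by rewrite -exp_plus Rplus_opp_r exp_0.
have hes : 0 < exp s := exp_pos _.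
have : a * exp s < b by nra.
nra.
Qed.

Theorem proposition5p3 (u c alpha : R) (hu : 0 < u)
  (hc : 0 < c /\ 0 < u * c < / exp 1 /\
        (exists d, derivable_pt_lim T1 (u * c) d /\ u * c * d - T1 (u * c) = u))
  (hcmin : forall c', 0 < c' -> 0 < u * c' < / exp 1 ->
        (exists d, derivable_pt_lim T1 (u * c') d /\ u * c' * d - T1 (u * c') = u) ->
        c <= c')
  (ha : 0 < alpha /\ alpha * exp (- alpha) = / ((1 + u) * exp 1))
  (hamin : forall a, 0 < a -> a * exp (- a) = / ((1 + u) * exp 1) -> alpha <= a) :
  c / (1 + / u * T1 (u * c)) = alpha.
Proof.
case: hc => [c0 [hx0 [d [hd hueq]]]].
have dY : d = Y (u * c) := uniqueness_limite _ _ _ _ hd (T1_deriv _ hx0).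
have [hY [hT [e1 e2]]] := pos_facts _ hx0.
have hh := hf_zero _ hx0 (u * c) ltac:(lra).
rewrite /hf in hh.
have hT1 : T1 (u * c) = 1 - exp (- Tt (u * c)).
  rewrite T1_eq; last by rewrite Rabs_right; lra.
  exact: T1s_closed.
move: hueq hT1 hh e1 hT hY; rewrite dY.
set t := Tt (u * c); set y := Y (u * c); set x0 := u * c.
move=> hueq hT1 hh e1 hT hY.
have hE : exp (- t) * exp t = 1 by rewrite -exp_plus Rplus_opp_l exp_0.
have hEp : 0 < exp t := exp_pos t.
have hE1 : 0 < exp 1 := exp_pos 1.
have ex0 : x0 = t * exp (- t) by lra.
have hy : y = / (1 - t) by apply (Rmult_eq_reg_r (1 - t)); [rewrite e1 Rinv_l //; lra | lra].
have h1u : 1 + u = exp (- t) / (1 - t).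
  have : u = x0 * y - T1 x0 by lra.
  move=> ->; rewrite hT1 ex0 hy; field; lra.
have galpha : (1 - t) * exp (- (1 - t)) = / ((1 + u) * exp 1).
  rewrite h1u.
  have -> : exp (- (1 - t)) = exp t * / exp 1.
    by rewrite -exp_Ropp -exp_plus; f_equal; ring.
  have -> : exp (- t) = / exp t by rewrite exp_Ropp.
  field; repeat split; lra.
have al : alpha = 1 - t.
  have le := hamin (1 - t) ltac:(lra) galpha.
  case: (Rle_lt_or_eq_dec _ _ le) => // lt.
  have := g_strict alpha (1 - t) (proj1 ha) lt ltac:(lra).
  rewrite (proj2 ha) galpha; lra.
rewrite al.
have eT1 : T1 x0 = x0 * y - u by lra.
rewrite eT1 /x0.
have -> : 1 + / u * (u * c * y - u) = c * y by field; lra.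
rewrite hy; field; repeat split; lra.
Qed.
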